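(* Let $(\mathcal A,X,\alpha)$ be a PTS of type $\diamond\in\{0,*,\omega,\infty\}$. For every $x\in X$ the defining equations of the trace determine a well-defined $\sigma$-finite pre-measure $\mathbf{tr}(x):\mathcal S_\diamond\to[0,1]$, and its unique extension to a measure on $\sigma(\mathcal S_\diamond)$ is a sub-probability measure; for $\diamond\in\{\omega,\infty\}$ it is a probability measure.
   Context: $\mathcal A$ is a finite alphabet with $\sigma$-algebra $\mathcal P(\mathcal A)$; $\mathbf 1=\{\checkmark\}$; products carry product $\sigma$-algebras and disjoint unions the disjoint-union $\sigma$-algebra. $\mathbb S(Y)$ / $\mathbb P(Y)$: sub-probability / probability measures on $\Sigma_Y$, measurable structure generated by evaluation maps $P\mapsto P(S)$. A PTS of type $\diamond$ is $(\mathcal A,X,\alpha)$ with $X$ a measurable space and $\alpha$ a measurable map $X\to\mathbb S(\mathcal A\times X)$ (type $0$), $X\to\mathbb S(\mathcal A\times X+\mathbf 1)$ (type $*$), $X\to\mathbb P(\mathcal A\times X)$ (type $\omega$), $X\to\mathbb P(\mathcal A\times X+\mathbf 1)$ (type $\infty$). $\mathbf P_a(x,S):=\alpha(x)(\{a\}\times S)$ for $S\in\Sigma_X$. Words: $\mathcal A^*,\mathcal A^\omega$ finite/infinite words, $\mathcal A^\infty=\mathcal A^*\cup\mathcal A^\omega$, $\mathcal A^0:=\emptyset$ for type $0$ (carrier), $\sqsubseteq$ prefix; $C_\omega(u)=\{v\in\mathcal A^\omega:u\sqsubseteq v\}$, $C_\infty(u)=\{v\in\mathcal A^\infty:u\sqsubseteq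 v\}$. Semirings: $\mathcal S_0=\{\emptyset\}$ on $\emptyset$, $\mathcal S_*=\{\emptyset\}\cup\{\{u\}:u\in\mathcal A^*\}$, $\mathcal S_\omega=\{\emptyset\}\cup\{C_\omega(u):u\in\mathcal A^*\}$, $\mathcal S_\infty=\{\emptyset\}\cup\{\{u\}\}_{u\in\mathcal A^*}\cup\{C_\infty(u)\}_{u\in\mathcal A^*}$. Trace equations: $\mathbf{tr}(x)(\emptyset)=0$; for $\diamond\in\{*,\infty\}$: $\mathbf{tr}(x)(\{\epsilon\})=\alpha(x)(\mathbf 1)$ and $\mathbf{tr}(x)(\{au\})=\int_{x'\in X}\mathbf{tr}(x')(\{u\})\,d\mathbf P_a(x,x')$; for $\diamond\in\{\omega,\infty\}$: $\mathbf{tr}(x)(C_\diamond(\epsilon))=1$ and $\mathbf{tr}(x)(C_\diamond(au))=\int_{x'\in X}\mathbf{tr}(x')(C_\diamond(u))\,d\mathbf P_a(x,x')$, for all $a\in\mathcal A$, $u\in\mathcal A^*$. A pre-measure on a semiring is a map into $[0,\infty]$ vanishing on $\emptyset$ and $\sigma$-additive (on countable disjoint families whose union lies in the semiring); $\sigma$-finite means some countable cover by members of finite measure exists. *)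

(* Defs.v *)
From HB Require Import structures.
From mathcomp Require Import all_boot all_order all_algebra.
From mathcomp Require Import all_classical all_reals all_analysis.
From mathcomp Require Import measurable_realfun.

Set Implicit Arguments.
Unset Strict Implicit.
Unset Printing Implicit Defensive.
Import Order.TTheory GRing.Theory Num.Theory.

Local Open Scope classical_set_scope.
Local Open Scope ring_scope.
Local Open Scope ereal_scope.

(* The measurable space  A x X + 1  (A finite with the discrete sigma-algebra *)
(* P(A), product sigma-algebra on A x X, disjoint-union sigma-algebra with   *)
(* the one-point space 1 = {checkmark}).  It is represented on the type      *)
(* option (A * X): [Some (a, x)] is (a, x) in A x X and [None] is checkmark. *)
(* Since A is finite and carries P(A), a set S is measurable iff every       *)
(* section [set x | S (Some (a, x))] is measurable in X (no constraint on    *)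
(* the None part, since 1 carries its power set).                            *)

Definition pts_space (A : Type) (X : Type) := option (A * X).

Section pts_space_instance.
Context (A : finType) (d : measure_display) (X : measurableType d).

Definition pts_measurable : set (set (pts_space A X)) :=
  [set S | forall a : A, measurable [set x : X | S (Some (a, x))]].

Lemma pts_measurable0 : pts_measurable set0.
Proof. by move=> a; rewrite [X in measurable X](_ : _ = set0). Qed.

Lemma pts_measurableC S : pts_measurable S -> pts_measurable (~` S).
Proof.
move=> mS a.
rewrite [X in measurable X](_ : _ = ~` [set x : X | S (Some (a, x))]) //.
exact: measurableC.
Qed.

Lemma pts_measurableU (F : (set (pts_space A X))^nat) :
  (forall i, pts_measurable (F i)) -> pts_measurable (\bigcup_i F i).
Proof.
move=> mF a.
rewrite [X in measurable X](_ : _ = \bigcup_i [set x : X | F i (Some (a, x))]).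
  by apply: bigcupT_measurable => i; exact: mF.
by apply/seteqP; split => x /= [i _ Fi]; exists i.
Qed.

HB.instance Definition _ := Pointed.copy (pts_space A X) (option (A * X)).
HB.instance Definition _ := @isMeasurable.Build default_measure_display
  (pts_space A X) pts_measurable pts_measurable0 pts_measurableC
  pts_measurableU.

End pts_space_instance.

(*   A^0 := empty (type void), A^* = seq A, A^omega = nat -> A,              *)
(*   A^infty = A^* + A^omega  (inl = finite word, inr = infinite word).       *)

Section words.
Context (A : finType).

Definition inf_word := (seq A + (nat -> A))%type.

Definition cyl_omega (u : seq A) : set (nat -> A) :=
  [set v | mkseq v (size u) = u].

Definition cyl_inf (u : seq A) : set inf_word :=
  [set w | match w with
           | inl v => prefix u v
           | inr v => mkseq v (size u) = u
           end].

Definition S_zero : set (set void) := [set s | s = set0].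

Definition S_star : set (set (seq A)) :=
  [set s | s = set0 \/ exists u : seq A, s = [set u]].

Definition S_omega : set (set (nat -> A)) :=
  [set s | s = set0 \/ exists u : seq A, s = cyl_omega u].

Definition S_inf : set (set inf_word) :=
  [set s | s = set0 \/ (exists u : seq A, s = [set inl u])
                    \/ (exists u : seq A, s = cyl_inf u)].

End words.

Section measure_notions.
Context (R : realType) (W : Type).

Definition premeasure_on (S : set (set W)) (m : set W -> \bar R) : Prop :=
  [/\ m set0 = 0,
      (forall s, S s -> 0 <= m s) &
      (forall F : nat -> set W, (forall n, S (F n)) -> trivIset setT F ->
         S (\bigcup_n F n) ->
         (fun n => \sum_(0 <= k < n) m (F k)) @ \oo --> m (\bigcup_n F n))].

Definition sigma_finite_on (S : set (set W)) (m : set W -> \bar R) : Prop :=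
  exists F : nat -> set W, [/\ (forall n, S (F n)),
                               (forall n, m (F n) < +oo) &
                               \bigcup_n F n = setT].

(* measure on the sigma-algebra Sig (a family of sets closed under countable *)
(* unions, so no union condition is needed)                                  *)
Definition measure_on (Sig : set (set W)) (mu : set W -> \bar R) : Prop :=
  [/\ mu set0 = 0,
      (forall s, Sig s -> 0 <= mu s) &
      (forall F : nat -> set W, (forall n, Sig (F n)) -> trivIset setT F ->
         (fun n => \sum_(0 <= k < n) mu (F k)) @ \oo --> mu (\bigcup_n F n))].

Definition trace_conclusion (X : Type) (S : set (set W))
    (Sol : (X -> set W -> \bar R) -> Prop) (prob : bool) : Prop :=
  [/\ (exists tr, Sol tr),
      (forall tr1 tr2, Sol tr1 -> Sol tr2 ->
         forall x s, S s -> tr1 x s = tr2 x s) &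
      (forall tr, Sol tr -> forall x : X,
        [/\ (forall s, S s -> 0 <= tr x s <= 1),
            premeasure_on S (tr x),
            sigma_finite_on S (tr x) &
            exists mu : set W -> \bar R,
              [/\ measure_on <<s S >> mu,
                  (forall s, S s -> mu s = tr x s),
                  (forall nu, measure_on <<s S >> nu ->
                     (forall s, S s -> nu s = tr x s) ->
                     forall B, <<s S >> B -> nu B = mu B) &
                  (if prob then mu setT = 1 else mu setT <= 1)]])].

End measure_notions.

(*  P_a(x, .) = alpha(x)({a} x .), so                                        *)
(*    int_{x' in X} f(x') dP_a(x, x')                                        *)
(*      = int_{y in {a} x X} f(snd y) d alpha(x)                              *)
(*  which is how the integrals are written below.                            *)
(* A solution must have measurable sections x |-> tr(x)(s) for s in the      *)
(* semiring, so that the integrals in the equations are meaningful.          *)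

Section trace_equations.
Context (R : realType) (d : measure_display) (X : measurableType d)
        (A : finType).
Variable alpha : X -> {measure set (pts_space A X) -> \bar R}.

Definition letter_set (a : A) : set (pts_space A X) :=
  [set y | exists x' : X, y = Some (a, x')].

Definition lift_X (f : X -> \bar R) (y : pts_space A X) : \bar R :=
  match y with Some (_, x') => f x' | None => 0 end.

Definition Pa_integral (a : A) (x : X) (f : X -> \bar R) : \bar R :=
  \int[alpha x]_(y in letter_set a) lift_X f y.

Definition sections_measurable (W : Type) (S : set (set W))
    (tr : X -> set W -> \bar R) : Prop :=
  forall s, S s -> measurable_fun [set: X] (fun x => (tr x s : \bar R)).

Definition trace_sol_zero (tr : X -> set void -> \bar R) : Prop :=
  sections_measurable S_zero tr /\ forall x, tr x set0 = 0.

Definition trace_sol_star (tr : X -> set (seq A) -> \bar R) : Prop :=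
  [/\ sections_measurable (@S_star A) tr,
      (forall x, tr x set0 = 0),
      (forall x, tr x [set [::]] = alpha x [set None]) &
      (forall x a u, tr x [set a :: u] =
                     Pa_integral a x (fun x' => tr x' [set u]))].

Definition trace_sol_omega (tr : X -> set (nat -> A) -> \bar R) : Prop :=
  [/\ sections_measurable (@S_omega A) tr,
      (forall x, tr x set0 = 0),
      (forall x, tr x (cyl_omega [::]) = 1) &
      (forall x a u, tr x (cyl_omega (a :: u)) =
                     Pa_integral a x (fun x' => tr x' (cyl_omega u)))].

Definition trace_sol_inf (tr : X -> set (inf_word A) -> \bar R) : Prop :=
  [/\ sections_measurable (@S_inf A) tr,
      (forall x, tr x set0 = 0),
      (forall x, tr x [set inl [::]] = alpha x [set None]) /\
      (forall x a u, tr x [set inl (a :: u)] =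
                     Pa_integral a x (fun x' => tr x' [set inl u])),
      (forall x, tr x (cyl_inf [::]) = 1) &
      (forall x a u, tr x (cyl_inf (a :: u)) =
                     Pa_integral a x (fun x' => tr x' (cyl_inf u)))].

End trace_equations.

(* Main.v *)
Require Import Defs.
From HB Require Import structures.
From mathcomp Require Import all_boot all_order all_algebra.
From mathcomp Require Import all_classical all_reals all_analysis.
From mathcomp Require Import measurable_realfun.

Set Implicit Arguments.
Unset Strict Implicit.
Unset Printing Implicit Defensive.
Import Order.TTheory GRing.Theory Num.Theory.

Local Open Scope classical_set_scope.
Local Open Scope ring_scope.
Local Open Scope ereal_scope.

Section measure_of.
Context (R : realType) (W : pointedType) (S : set (set W)) (nu : set W -> \bar R).
Hypothesis Hnu : measure_on <<s S>> nu.

Definition mof : set (g_sigma_algebraType S) -> \bar R :=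
  fun B => if `[< <<s S>> B >] then nu B else 0.

Lemma mofE B : <<s S>> B -> mof B = nu B.
Proof. by move=> h; rewrite /mof; case: asboolP. Qed.

Lemma mof0 : mof set0 = 0.
Proof.
rewrite mofE; first by case: Hnu.
exact: (@measurable0 _ (g_sigma_algebraType S)).
Qed.

Lemma mof_ge0 B : 0 <= mof B.
Proof. by rewrite /mof; case: asboolP => // h; case: Hnu => _ h2 _; exact: h2. Qed.

Lemma mof_sa : semi_sigma_additive mof.
Proof.
move=> F mF tF mU; rewrite mofE //.
have -> : (fun n => \sum_(0 <= i < n) mof (F i)) = (fun n => \sum_(0 <= i < n) nu (F i)).
  by apply/funext => n; apply: eq_bigr => i _; rewrite mofE //; exact: mF.
by case: Hnu => _ _ h; exact: h.
Qed.

HB.instance Definition _ := @isMeasure.Build _ (g_sigma_algebraType S) R mof mof0 mof_ge0 mof_sa.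

Lemma nu_unique (mu : {measure set (g_sigma_algebraType S) -> \bar R}) (g : nat -> set W) :
  setI_closed S -> (forall n, S (g n)) -> \bigcup_n g n = setT ->
  (forall s, S s -> nu s = mu s) -> (forall n, nu (g n) < +oo) ->
  forall B, <<s S>> B -> nu B = mu B.
Proof.
move=> SI Sg gT numu gfin B mB.
rewrite -(mofE mB).
have h1 : forall s, S s -> mof s = mu s.
  by move=> s Ss; rewrite mofE ?numu //; exact: sub_gen_smallest.
have h2 : forall k, mof (g k) < +oo.
  by move=> k; rewrite mofE //; exact: sub_gen_smallest.
exact: (@measure_unique _ R (g_sigma_algebraType S) S g erefl SI Sg gT mof mu h1 h2 B mB).
Qed.

End measure_of.

Lemma finish (R : realType) (W : pointedType) (S : set (set W)) (t : set W -> \bar R)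
  (mu : {measure set (g_sigma_algebraType S) -> \bar R}) (prob : bool) (g : nat -> set W) :
  S set0 -> setI_closed S -> (forall n, S (g n)) -> (forall n, t (g n) < +oo) ->
  \bigcup_n g n = setT ->
  (forall s, S s -> mu s = t s) ->
  (if prob then mu setT = 1 else mu setT <= 1) ->
  [/\ (forall s, S s -> 0 <= t s <= 1), premeasure_on S t, sigma_finite_on S t &
   exists mu0 : set W -> \bar R, [/\ measure_on <<s S>> mu0,
      (forall s, S s -> mu0 s = t s),
      (forall nu, measure_on <<s S>> nu -> (forall s, S s -> nu s = t s) ->
          forall B, <<s S>> B -> nu B = mu0 B) &
      (if prob then mu0 setT = 1 else mu0 setT <= 1)]].
Proof.
move=> S0 SI Sg tg gT mut hT.
have mS s : S s -> measurable (s : set (g_sigma_algebraType S)).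
  by move=> Ss; exact: sub_gen_smallest.
have mT1 : mu setT <= 1 by case: prob hT => // ->.
split.
- move=> s Ss; rewrite -mut //; rewrite measure_ge0 /=.
  apply: le_trans mT1; apply: le_measure => //; rewrite inE //; exact: mS.
- split.
  + by rewrite -mut // measure0.
  + by move=> s Ss; rewrite -mut // measure_ge0.
  + move=> F SF tF SU; rewrite -mut //.
    have -> : (fun n => \sum_(0 <= k < n) t (F k)) = (fun n => \sum_(0 <= k < n) mu (F k)).
      by apply/funext => n; apply: eq_bigr => i _; rewrite mut.
    apply: measure_semi_sigma_additive => //; first by move=> i; exact: mS.
    exact: mS.
- by exists g; split.
- exists mu; split => //.
  + split; first exact: measure0.
    * by move=> s _; exact: measure_ge0.
    * move=> F mF tF; apply: measure_semi_sigma_additive => //.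
      exact: (@bigcupT_measurable _ (g_sigma_algebraType S)).
  + move=> nu Hnu nuS B mB.
    apply: (nu_unique Hnu SI Sg gT) => //.
    * by move=> s Ss; rewrite nuS // mut.
    * by move=> k; rewrite nuS.
Qed.

Section walk.
Context (R : realType) (A : finType) (c s : seq A -> R).
Hypothesis c0 : forall u, (0 <= c u)%R.
Hypothesis s0 : forall u, (0 <= s u)%R.
Hypothesis hrel : forall u, (s u + \sum_(a : A) c (rcons u a) <= c u)%R.

Local Open Scope ring_scope.

Definition rk (a : A) : nat := enum_rank a.

Fixpoint Lrev (r : seq A) : R :=
  match r with
  | [::] => 0
  | a :: r' => Lrev r' + s (rev r') + \sum_(b : A | (rk b < rk a)%N) c (rcons (rev r') b)
  end.

Definition L (u : seq A) := Lrev (rev u).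

Lemma L0 : L [::] = 0. Proof. by []. Qed.

Lemma L_rcons u a : L (rcons u a) = L u + s u + \sum_(b : A | (rk b < rk a)%N) c (rcons u b).
Proof. by rewrite /L rev_rcons /= revK. Qed.

Definition inC (u : seq A) (y : R) : bool := (L u <= y) && (y < L u + c u).
Definition inS (u : seq A) (y : R) : bool := (L u <= y) && (y < L u + s u).

Lemma sum_sub (P Q : pred A) (f : A -> R) : (forall a, 0 <= f a) ->
  (forall a, Q a -> P a) -> \sum_(a | Q a) f a <= \sum_(a | P a) f a.
Proof.
move=> f0 QP; rewrite [X in _ <= X](bigID Q) /=.
have -> : \sum_(i | P i && Q i) f i = \sum_(i | Q i) f i.
  by apply: eq_bigl => i; case Qi: (Q i); rewrite ?andbT ?andbF ?QP.
by rewrite lerDl sumr_ge0.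
Qed.

Lemma sum_lt_rk u a (b : A) : (rk a < rk b)%N ->
  \sum_(x | (rk x < rk a)%N) c (rcons u x) + c (rcons u a) <=
  \sum_(x | (rk x < rk b)%N) c (rcons u x).
Proof.
move=> ab; rewrite [X in _ <= X](bigD1 a) //= [X in X <= _]addrC lerD2l.
apply: sum_sub => // x /= xa; rewrite (ltn_trans xa ab) andTb.
by apply/eqP => ex; rewrite ex ltnn in xa.
Qed.

Lemma sum_le_all u a :
  \sum_(x | (rk x < rk a)%N) c (rcons u x) + c (rcons u a) <= \sum_x c (rcons u x).
Proof.
rewrite [X in _ <= X](bigD1 a) //= [X in X <= _]addrC lerD2l.
by apply: sum_sub => // x /= xa; apply/eqP => ex; rewrite ex ltnn in xa.
Qed.

Lemma s_le_c u : s u <= c u.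
Proof. by apply: le_trans (hrel u); rewrite lerDl sumr_ge0. Qed.

Lemma inS_inC u y : inS u y -> inC u y.
Proof.
case/andP => h1 h2; rewrite /inC h1 /=.
by apply: lt_le_trans h2 _; rewrite lerD2l s_le_c.
Qed.

Lemma F1 u a y : inC (rcons u a) y -> inC u y.
Proof.
rewrite /inC L_rcons => /andP[h1 h2]; apply/andP; split.
  apply: le_trans h1; rewrite -addrA lerDl addr_ge0 // sumr_ge0 //.
apply: lt_le_trans h2 _.
rewrite -!addrA lerD2l; apply: le_trans (hrel u).
by rewrite lerD2l sum_le_all.
Qed.

Lemma F2 u a b y : inC (rcons u a) y -> inC (rcons u b) y -> a = b.
Proof.
have key : forall a b, (rk a < rk b)%N -> inC (rcons u a) y -> inC (rcons u b) y -> False.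
  move=> a' b' ab; rewrite /inC !L_rcons => /andP[_ h2] /andP[h3 _].
  have := le_lt_trans h3 h2; rewrite -!addrA ltrD2l ltrD2l.
  by rewrite ltNge sum_lt_rk.
move=> ha hb; case: (ltngtP (rk a) (rk b)) => ab.
- by case: (key _ _ ab ha hb).
- by case: (key _ _ ab hb ha).
- by apply: enum_rank_inj; apply: val_inj.
Qed.

Lemma F3 u a y : inS u y -> ~~ inC (rcons u a) y.
Proof.
rewrite /inS /inC L_rcons => /andP[_ h2]; apply/negP => /andP[h3 _].
have := le_lt_trans h3 h2; rewrite ltNge lerDl.
by rewrite sumr_ge0.
Qed.

Lemma divt (f : nat -> R) (y : R) n : f 0%N <= y -> y < f n ->
  exists2 k, (k < n)%N & (f k <= y) && (y < f k.+1).
Proof.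
elim: n => [h1 h2|n IH h1 h2]; first by have := le_lt_trans h1 h2; rewrite ltxx.
case: (leP (f n) y) => hn.
  by exists n => //; rewrite hn h2.
by case: (IH h1 hn) => k kn hk; exists k => //; apply: ltnW.
Qed.

Lemma sum_rk_S u (k : 'I_#|A|) :
  \sum_(b : A | (rk b < k.+1)%N) c (rcons u b) =
  \sum_(b : A | (rk b < k)%N) c (rcons u b) + c (rcons u (enum_val k)).
Proof.
rewrite (bigD1 (enum_val k)) /=; last by rewrite /rk enum_valK.
rewrite addrC; congr (_ + _); apply: eq_bigl => b.
rewrite ltnS leq_eqVlt; case: eqP => [ek|nk] /=.
  have eb : b = enum_val k by rewrite -(enum_rankK b); congr enum_val; apply: val_inj.
  by rewrite ek ltnn eb eqxx.
case: (boolP (b == enum_val k)) => [/eqP eb|] /=.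
  by exfalso; apply: nk; rewrite eb /rk enum_valK.
by rewrite andbT.
Qed.

Lemma F4 u y : s u + \sum_(a : A) c (rcons u a) = c u -> inC u y -> ~~ inS u y ->
  exists a, inC (rcons u a) y.
Proof.
move=> ex /andP[h1 h2] /negP hS.
have h3 : L u + s u <= y.
  by rewrite leNgt; apply/negP => h; apply: hS; rewrite /inS h1 h.
pose f k := L u + s u + \sum_(b : A | (rk b < k)%N) c (rcons u b).
have f0 : f 0%N <= y by rewrite /f big_pred0 ?addr0 // => b; rewrite ltn0.
have fn : y < f #|A|.
  rewrite /f (eq_bigl xpredT); last by move=> b; rewrite /rk ltn_ord.
  by rewrite -addrA ex.
case: (divt f0 fn) => k kA /andP[k1 k2].
exists (enum_val (Ordinal kA)).
rewrite /inC L_rcons /rk enum_valK /=.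
move: k1 k2; rewrite /f /= -/rk.
have := sum_rk_S u (Ordinal kA); rewrite /= => ->.
by move=> -> /=; rewrite addrA.
Qed.

Definition wnext (y : R) (u : seq A) : option A := [pick a | inC (rcons u a) y].

Fixpoint pre (y : R) (n : nat) : seq A :=
  match n with
  | 0%N => [::]
  | n'.+1 => let u := pre y n' in
             if wnext y u is Some a then rcons u a else u
  end.

Lemma pre_size y n : (size (pre y n) <= n)%N.
Proof.
elim: n => //= n IH; case: (wnext y (pre y n)) => [a|]; first by rewrite size_rcons.
exact: leqW.
Qed.

Lemma pre_const y n : wnext y (pre y n) = None -> forall m, (n <= m)%N -> pre y m = pre y n.
Proof.
move=> hn; elim=> [|m IH]; first by rewrite leqn0 => /eqP ->.
rewrite leq_eqVlt => /orP[/eqP <-//|]; rewrite ltnS => nm.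
by rewrite /= IH // hn.
Qed.

Lemma pre_stall y m : (size (pre y m) < m)%N -> wnext y (pre y m) = None.
Proof.
elim: m => // m IH /=.
case E: (wnext y (pre y m)) => [a|].
  by rewrite size_rcons ltnS => /IH; rewrite E.
by rewrite E.
Qed.

Lemma pre_take y n m : (n <= m)%N -> pre y n = take n (pre y m).
Proof.
elim: m => [|m IH]; first by rewrite leqn0 => /eqP ->.
rewrite leq_eqVlt => /orP[/eqP ->|]; first by rewrite take_oversize // pre_size.
rewrite ltnS => nm; rewrite (IH nm) /=.
case E: (wnext y (pre y m)) => [a|] //.
have sz : size (pre y m) = m.
  apply/eqP; rewrite eqn_leq pre_size /= leqNgt; apply/negP => h.
  by rewrite pre_stall in E.
by rewrite -cats1 takel_cat // sz.
Qed.

Lemma inC_cat u v y : inC (u ++ v) y -> inC u y.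
Proof.
elim/last_ind: v => [|v a IH]; first by rewrite cats0.
by rewrite -rcons_cat => /F1.
Qed.

Lemma inC_take u k y : inC u y -> inC (take k u) y.
Proof. by rewrite -{1}(cat_take_drop k u) => /inC_cat. Qed.

Lemma inC_nil u y : inC u y -> inC [::] y.
Proof. by move/(inC_take 0); rewrite take0. Qed.

Lemma inC_pre u y : inC [::] y -> (inC u y <-> pre y (size u) = u).
Proof.
move=> h0; elim/last_ind: u => [|u a IH]; first by [].
rewrite size_rcons /=; split.
- move=> h; have hu := F1 h; rewrite (IH.1 hu).
  rewrite /wnext; case: pickP => [b hb|]; first by rewrite (F2 hb h).
  by move/(_ a); rewrite h.
- case E: (wnext y (pre y (size u))) => [b|] hb.
    move: hb => /eqP; rewrite eqseq_rcons => /andP[/eqP pu /eqP ba].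
    move: E; rewrite /wnext; case: pickP => // b' hb' [eb].
    by rewrite -ba -eb -pu.
  by have := pre_size y (size u); rewrite hb size_rcons ltnn.
Qed.

Definition stopn (y : R) (n : nat) : bool := inS (pre y n) y && (size (pre y n) == n).

Lemma stop_next y n : stopn y n -> wnext y (pre y n) = None.
Proof.
case/andP => h _; rewrite /wnext; case: pickP => // a ha.
by have := F3 a h; rewrite ha.
Qed.

Lemma stop_unique y n m : stopn y n -> stopn y m -> n = m.
Proof.
have key : forall n m, (n < m)%N -> stopn y n -> stopn y m -> False.
  move=> n' m' nm hn /andP[_ /eqP hm].
  have := pre_const (stop_next hn) (ltnW nm); move: hn => /andP[_ /eqP hn] E.
  by move: hm; rewrite E hn => mn; rewrite mn ltnn in nm.
move=> hn hm; case: (ltngtP n m) => // nm.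
- by case: (key _ _ nm hn hm).
- by case: (key _ _ nm hm hn).
Qed.

Lemma inS_stop u y : inC [::] y -> inS u y -> stopn y (size u) /\ pre y (size u) = u.
Proof.
move=> h0 hS; have hp := (inC_pre u h0).1 (inS_inC hS).
by rewrite /stopn hp hS eqxx.
Qed.

Definition stopfun (y : R) : option (seq A) :=
  if pselect (exists n, stopn y n) is left H then Some (pre y (ex_minn H)) else None.

Lemma stopfunP y u : inC [::] y -> (stopfun y = Some u <-> inS u y).
Proof.
move=> h0; rewrite /stopfun; case: pselect => [H|nH]; last first.
  split => // hS; exfalso; apply: nH; exists (size u).
  exact: (inS_stop h0 hS).1.
case: ex_minnP => n hn _; split.
  by case=> <-; case/andP: hn.
move=> hS; have [st pu] := inS_stop h0 hS.
by rewrite (stop_unique hn st) pu.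
Qed.

Lemma nostop_size y : s [::] + \sum_(a : A) c (rcons [::] a) = c [::] ->
  (forall u, s u + \sum_(a : A) c (rcons u a) = c u) ->
  inC [::] y -> (forall n, ~~ stopn y n) -> forall n, size (pre y n) = n.
Proof.
move=> _ ex h0 ns; elim=> [//|n IH].
have hC : inC (pre y n) y by apply/(inC_pre _ h0); rewrite IH.
have hS : ~~ inS (pre y n) y.
  by apply/negP => h; have := ns n; rewrite /stopn h IH eqxx.
have [a ha] := F4 (ex _) hC hS.
rewrite /= /wnext; case: pickP => [b hb|]; first by rewrite size_rcons IH.
by move/(_ a); rewrite ha.
Qed.

Lemma mkseq_pre y a0 : (forall n, size (pre y n) = n) ->
  forall k, mkseq (fun n => nth a0 (pre y n.+1) n) k = pre y k.
Proof.
move=> sz k; apply: (eq_from_nth (x0:=a0)); first by rewrite size_mkseq sz.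
move=> i; rewrite size_mkseq => ik; rewrite nth_mkseq //.
by rewrite (pre_take y ik) nth_take.
Qed.

End walk.

Section kernel_part.
Context (R : realType) (d : measure_display) (X : measurableType d) (A : finType).
Variable alpha : R.-spker X ~> pts_space A X.

Local Notation Y := (pts_space A X).

Lemma ptsM (S : set Y) : (forall a, measurable [set x : X | S (Some (a, x))]) -> measurable S.
Proof. by move=> h; exact: h. Qed.

Lemma mfT (D : set Y) (g : Y -> \bar R) : measurable_fun setT g -> measurable_fun D g.
Proof. by move=> h; apply: (measurable_funS measurableT) h. Qed.

Lemma measurable_letter (a : A) : measurable (letter_set a : set Y).
Proof.
move=> b; case: (eqVneq b a) => [->|ba].
  rewrite [X in measurable X](_ : _ = setT) //.
  by apply/seteqP; split => // x _; exists x.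
rewrite [X in measurable X](_ : _ = set0) //.
by apply/seteqP; split => // x [x' [eb _]]; move: ba; rewrite eb eqxx.
Qed.

Lemma measurable_None : measurable ([set None] : set Y).
Proof.
move=> b; rewrite [X in measurable X](_ : _ = set0) //.
by apply/seteqP; split => // x.
Qed.

Lemma measurable_lift (f : X -> \bar R) : measurable_fun setT f ->
  measurable_fun (setT : set Y) (lift_X f).
Proof.
move=> mf _ B mB; apply: ptsM => b /=.
rewrite [X in measurable X](_ : _ = f @^-1` B `&` setT).
  by rewrite setIC; exact: mf.
by apply/seteqP; split => x /=; rewrite ?setTI //; move=> [].
Qed.

Lemma lift_ge0 (f : X -> \bar R) : (forall x, 0 <= f x) -> forall y : Y, 0 <= lift_X f y.
Proof. by move=> f0 [[a x]|] /=. Qed.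

Lemma Pa_measurable a (f : X -> \bar R) : measurable_fun setT f -> (forall x, 0 <= f x) ->
  measurable_fun setT (fun x => Pa_integral alpha a x f).
Proof.
move=> mf f0.
rewrite /Pa_integral.
under eq_fun do rewrite integral_mkcond.
apply: (measurable_fun_integral_finite_kernel
   (fun z : X * Y => ((lift_X f) \_ (letter_set a)) z.2) alpha).
- by move=> [x y] /=; rewrite /patch; case: ifP => // _; apply: lift_ge0.
- apply: measurableT_comp; last exact: measurable_snd.
  by apply/(measurable_restrictT _ (measurable_letter a)); apply: mfT (measurable_lift mf).
Qed.

Lemma Pa_ge0 a x (f : X -> \bar R) : (forall x, 0 <= f x) -> 0 <= Pa_integral alpha a x f.
Proof. by move=> f0; apply: integral_ge0 => y _; apply: lift_ge0. Qed.

Lemma Pa_le a x (f g : X -> \bar R) : measurable_fun setT f -> measurable_fun setT g ->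
  (forall x, 0 <= f x) -> (forall x, f x <= g x) ->
  Pa_integral alpha a x f <= Pa_integral alpha a x g.
Proof.
move=> mf mg f0 fg; apply: ge0_le_integral.
- exact: measurable_letter.
- by move=> y _; apply: lift_ge0.
- exact: mfT (measurable_lift mf).
- exact: mfT (measurable_lift mg).
- by move=> [[b z]|] _ /=.
Qed.

Lemma Pa_sum a x (I : Type) (r : seq I) (F : I -> X -> \bar R) :
  (forall i, measurable_fun setT (F i)) -> (forall i x, 0 <= F i x) ->
  Pa_integral alpha a x (fun x' => \sum_(i <- r) F i x') =
  \sum_(i <- r) Pa_integral alpha a x (F i).
Proof.
move=> mF F0; rewrite /Pa_integral -ge0_integral_sum //.
- apply: eq_integral => -[[b z]|] _ /=; first by [].
  by rewrite big1.
- exact: measurable_letter.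
- by move=> i; exact: mfT (measurable_lift (mF i)).
- by move=> i y _; apply: lift_ge0.
Qed.

Lemma Pa_add a x (f g : X -> \bar R) : measurable_fun setT f -> measurable_fun setT g ->
  (forall x, 0 <= f x) -> (forall x, 0 <= g x) ->
  Pa_integral alpha a x (fun x' => f x' + g x') =
  Pa_integral alpha a x f + Pa_integral alpha a x g.
Proof.
move=> mf mg f0 g0; rewrite /Pa_integral -ge0_integralD //.
- by apply: eq_integral => -[[b z]|] _ /=; rewrite ?adde0.
- exact: measurable_letter.
- by move=> y _; apply: lift_ge0.
- exact: mfT (measurable_lift mf).
- by move=> y _; apply: lift_ge0.
- exact: mfT (measurable_lift mg).
Qed.

Lemma Pa_one a x : Pa_integral alpha a x (fun _ => 1) = alpha x (letter_set a).
Proof.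
rewrite /Pa_integral.
rewrite (eq_integral (fun _ => 1)).
  by rewrite integral_cst ?mul1e //; exact: measurable_letter.
by move=> y; rewrite inE => -[x' ->].
Qed.

Lemma alpha_split x : alpha x setT = alpha x [set None] + \sum_(a : A) alpha x (letter_set a).
Proof.
have key : forall r : seq A, uniq r ->
    alpha x (\big[setU/set0]_(a <- r) letter_set a) = \sum_(a <- r) alpha x (letter_set a).
  elim=> [|a r IH]; first by rewrite !big_nil measure0.
  move=> /= /andP[ar ur]; rewrite !big_cons measureU; first by congr (_ + _); apply: IH.
  - exact: measurable_letter.
  - by apply: bigsetU_measurable => b _; exact: measurable_letter.
  - apply/seteqP; split => // y [[x' ->]].
    rewrite -bigcup_seq => -[b /= br [x'' [eb _]]].
    by move: ar; rewrite eb br.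
rewrite -key ?index_enum_uniq // -measureU.
- congr (alpha x _); apply/seteqP; split => // -[[a x']|] _; [right|by left].
  rewrite -bigcup_seq; exists a; first by rewrite /= mem_index_enum.
  by exists x'.
- exact: measurable_None.
- by apply: bigsetU_measurable => b _; exact: measurable_letter.
- apply/seteqP; split => // y [->].
  by rewrite -bigcup_seq => -[b _ [x'' ]].
Qed.

Fixpoint TS (u : seq A) : X -> \bar R :=
  match u with
  | [::] => fun x => alpha x [set None]
  | a :: u' => fun x => Pa_integral alpha a x (TS u')
  end.

Fixpoint TC (u : seq A) : X -> \bar R :=
  match u with
  | [::] => fun _ => 1
  | a :: u' => fun x => Pa_integral alpha a x (TC u')
  end.

Fixpoint TQ (u : seq A) : X -> \bar R :=
  match u with
  | [::] => fun x => alpha x setT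
  | a :: u' => fun x => Pa_integral alpha a x (TQ u')
  end.

Lemma TS_ge0 u x : 0 <= TS u x.
Proof. by elim: u x => [|a u IH] x /=; [exact: measure_ge0|apply: Pa_ge0]. Qed.
Lemma TC_ge0 u x : 0 <= TC u x.
Proof. by elim: u x => [|a u IH] x /=; [exact: lee01|apply: Pa_ge0]. Qed.
Lemma TQ_ge0 u x : 0 <= TQ u x.
Proof. by elim: u x => [|a u IH] x /=; [exact: measure_ge0|apply: Pa_ge0]. Qed.

Lemma TS_meas u : measurable_fun setT (TS u).
Proof.
elim: u => [|a u IH] /=; first exact: (measurable_kernel alpha _ measurable_None).
by apply: Pa_measurable => // x; exact: TS_ge0.
Qed.
Lemma TC_meas u : measurable_fun setT (TC u).
Proof.
elim: u => [|a u IH] /=; first exact: measurable_cst.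
by apply: Pa_measurable => // x; exact: TC_ge0.
Qed.
Lemma TQ_meas u : measurable_fun setT (TQ u).
Proof.
elim: u => [|a u IH] /=; first exact: (measurable_kernel alpha _ measurableT).
by apply: Pa_measurable => // x; exact: TQ_ge0.
Qed.

Lemma T_rel u x : TS u x + \sum_(a : A) TC (rcons u a) x = TQ u x.
Proof.
elim: u x => [|b u IH] x /=.
  by rewrite alpha_split; congr (_ + _); apply: eq_bigr => a _ /=; rewrite Pa_one.
rewrite -Pa_sum; last 2 first.
- by move=> a; exact: TC_meas.
- by move=> a x'; exact: TC_ge0.
rewrite -Pa_add.
- by congr Pa_integral; apply/funext => x'; rewrite IH.
- exact: TS_meas.
- by apply: emeasurable_sum => a; exact: TC_meas.
- by move=> x'; exact: TS_ge0.
- by move=> x'; apply: sume_ge0 => a _; exact: TC_ge0.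
Qed.

Lemma TQ_le_TC u x : TQ u x <= TC u x.
Proof.
elim: u x => [|a u IH] x /=; first exact: sprob_kernel_le1.
by apply: Pa_le => //; [exact: TQ_meas|exact: TC_meas|exact: TQ_ge0].
Qed.

Lemma TC_le1 u x : TC u x <= 1.
Proof.
elim: u x => [|a u IH] x /=; first by [].
apply: le_trans (Pa_le a x (TC_meas u) (measurable_cst (1 : \bar R)) (@TC_ge0 u) IH) _.
rewrite Pa_one; apply: le_trans (sprob_kernel_le1 alpha x).
by apply: le_measure => //; rewrite inE //; exact: measurable_letter.
Qed.

Lemma TS_le_TC u x : TS u x <= TC u x.
Proof.
apply: le_trans (TQ_le_TC u x); rewrite -T_rel leeDl //.
by apply: sume_ge0 => a _; exact: TC_ge0.
Qed.

Lemma TQ_eq_TC (hp : forall x, alpha x setT = 1) u x : TQ u x = TC u x.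
Proof.
elim: u x => [|a u IH] x /=; first exact: hp.
by congr Pa_integral; apply/funext => x'; rewrite IH.
Qed.

Lemma TC_fin u x : TC u x \is a fin_num.
Proof. by rewrite ge0_fin_numE ?TC_ge0 // (le_lt_trans (TC_le1 u x)) // ltey. Qed.
Lemma TS_fin u x : TS u x \is a fin_num.
Proof.
by rewrite ge0_fin_numE ?TS_ge0 // (le_lt_trans (TS_le_TC u x)) // (le_lt_trans (TC_le1 u x)) // ltey.
Qed.

Definition cR x (u : seq A) : R := fine (TC u x).
Definition sR x (u : seq A) : R := fine (TS u x).

Lemma cR_ge0 x u : (0 <= cR x u)%R.
Proof. by rewrite /cR fine_ge0 // TC_ge0. Qed.
Lemma sR_ge0 x u : (0 <= sR x u)%R.
Proof. by rewrite /sR fine_ge0 // TS_ge0. Qed.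

Lemma cRE x u : (cR x u)%:E = TC u x.
Proof. by rewrite /cR fineK // TC_fin. Qed.
Lemma sRE x u : (sR x u)%:E = TS u x.
Proof. by rewrite /sR fineK // TS_fin. Qed.

Lemma relR x u : (sR x u + \sum_(a : A) cR x (rcons u a) <= cR x u)%R.
Proof.
rewrite -lee_fin EFinD -sumEFin sRE.
under eq_bigr do rewrite cRE.
by rewrite T_rel cRE TQ_le_TC.
Qed.

Lemma relR_eq (hp : forall x, alpha x setT = 1) x u :
  (sR x u + \sum_(a : A) cR x (rcons u a) = cR x u)%R.
Proof.
apply: EFin_inj; rewrite EFinD -sumEFin sRE.
under eq_bigr do rewrite cRE.
by rewrite T_rel cRE TQ_eq_TC.
Qed.

Lemma cR_nil x : cR x [::] = 1%R.
Proof. by rewrite /cR /=. Qed.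

End kernel_part.

Lemma leb_itv (R : realType) (a c : R) : (0 <= c)%R ->
  lebesgue_measure [set y : R | (a <= y)%R && (y < a + c)%R] = c%:E.
Proof.
move=> c0.
have -> : [set y : R | (a <= y)%R && (y < a + c)%R] = [set` (`[a, a + c[)%R].
  by apply/seteqP; split => y /=; rewrite in_itv.
rewrite lebesgue_measure_itv /= lte_fin.
rewrite le_eqVlt in c0; case/orP: c0 => [/eqP <-|c0].
  by rewrite addr0 ltxx.
by rewrite ltrDl c0 -EFinB addrC addKr.
Qed.

Section pushmeasure.
Context (R : realType) (W : pointedType) (S : set (set W)) (D : set R).
Hypothesis mD : measurable D.
Variable phi : R -> W.
Hypothesis mphi : forall s, S s -> measurable (D `&` phi @^-1` s).

Definition psi (y : R) : W := if pselect (D y) then phi y else point.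

Lemma mpsi : measurable_fun setT (psi : R -> g_sigma_algebraType S).
Proof.
apply: (@measurability _ _ _ (g_sigma_algebraType S) setT psi S erefl).
move=> _ [s Ss <-].
have -> : setT `&` psi @^-1` s = (D `&` phi @^-1` s) `|` (~` D `&` [set _ | s point]).
  apply/seteqP; split => y /=; rewrite /psi; case: pselect => Dy /=.
  - by move=> [_ h]; left.
  - by move=> [_ h]; right.
  - by case=> [[_ h]|[]].
  - by case=> [[]|[_ h]].
apply: measurableU; first exact: mphi.
apply: measurableI; first exact: measurableC.
case: (pselect (s point)) => h.
  by rewrite [X in measurable X](_ : _ = setT) //; apply/seteqP; split.
by rewrite [X in measurable X](_ : _ = set0) //; apply/seteqP; split.
Qed.

Lemma mphiG (B : set W) : <<s S>> B -> measurable (D `&` phi @^-1` B).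
Proof.
move=> mB; have h := mpsi measurableT mB; rewrite setTI in h.
have -> : D `&` phi @^-1` B = D `&` psi @^-1` B.
  apply/seteqP; split => y [Dy h']; split => //; move: h';
    by rewrite /psi /preimage /=; case: pselect.
exact: measurableI.
Qed.

Definition pmu : set (g_sigma_algebraType S) -> \bar R :=
  fun B => lebesgue_measure (D `&` phi @^-1` B).

Lemma pmu0 : pmu set0 = 0.
Proof. by rewrite /pmu preimage_set0 setI0 measure0. Qed.

Lemma pmu_ge0 B : 0 <= pmu B.
Proof. exact: measure_ge0. Qed.

Lemma pmu_sa : semi_sigma_additive pmu.
Proof.
move=> F mF tF mU; rewrite /pmu preimage_bigcup setI_bigcupr.
apply: measure_semi_sigma_additive.
- by move=> n; apply: mphiG; exact: mF.
- apply/trivIsetP => i j _ _ ij.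
  rewrite setIACA setIid -preimage_setI.
  by move/trivIsetP : tF => /(_ _ _ Logic.I Logic.I ij) ->; rewrite preimage_set0 setI0.
- rewrite -setI_bigcupr -preimage_bigcup; apply: mphiG; exact: mU.
Qed.

HB.instance Definition _ := @isMeasure.Build _ (g_sigma_algebraType S) R pmu pmu0 pmu_ge0 pmu_sa.

Lemma push_finish (t : set W -> \bar R) (prob : bool) (g : nat -> set W) :
  S set0 -> setI_closed S -> (forall n, S (g n)) -> (forall n, t (g n) < +oo) ->
  \bigcup_n g n = setT ->
  (forall s, S s -> lebesgue_measure (D `&` phi @^-1` s) = t s) ->
  (if prob then lebesgue_measure D = 1 else lebesgue_measure D <= 1) ->
  [/\ (forall s, S s -> 0 <= t s <= 1), premeasure_on S t, sigma_finite_on S t &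
   exists mu0 : set W -> \bar R, [/\ measure_on <<s S>> mu0,
      (forall s, S s -> mu0 s = t s),
      (forall nu, measure_on <<s S>> nu -> (forall s, S s -> nu s = t s) ->
          forall B, <<s S>> B -> nu B = mu0 B) &
      (if prob then mu0 setT = 1 else mu0 setT <= 1)]].
Proof.
move=> S0 SI Sg tg gT ht hp.
apply: (finish (mu := pmu)) S0 SI Sg tg gT _ _ => //.
have e : pmu setT = lebesgue_measure D.
  rewrite /pmu; congr lebesgue_measure; apply/seteqP; split => [y [] //|y Dy]; by split.
move: hp; rewrite -e; case: prob => h; exact: h.
Qed.

End pushmeasure.

Hint Resolve cR_ge0 sR_ge0 relR : core.

Lemma meas_inC (R : realType) (A : finType) (c s : seq A -> R) u :
  measurable [set y : R | inC c s u y].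
Proof.
have -> : [set y : R | inC c s u y] = [set` (`[L c s u, L c s u + c u[)%R].
  by apply/seteqP; split => y /=; rewrite in_itv.
exact: measurable_itv.
Qed.

Lemma leb_inC (R : realType) (A : finType) (c s : seq A -> R) u : (0 <= c u)%R ->
  lebesgue_measure [set y : R | inC c s u y] = (c u)%:E.
Proof. by move=> c0; rewrite /inC leb_itv. Qed.

Lemma take_mkseq (T : Type) (f : nat -> T) n m : (n <= m)%N -> take n (mkseq f m) = mkseq f n.
Proof. by move=> nm; rewrite /mkseq -map_take take_iota (minn_idPl nm). Qed.

Lemma cyl_omega_sub (A : finType) (u v : seq A) : (size u <= size v)%N ->
  (exists w, cyl_omega u w /\ cyl_omega v w) -> cyl_omega v `<=` cyl_omega u.
Proof.
move=> uv [w [wu wv]] w' wv'; rewrite /cyl_omega /= in wu wv wv' *.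
by rewrite -(take_mkseq _ uv) wv' -wv take_mkseq.
Qed.

Lemma setI_closed_omega (A : finType) : setI_closed (@S_omega A).
Proof.
move=> B C [->|[u ->]]; first by rewrite set0I; left.
move=> [->|[v ->]]; first by rewrite setI0; left.
case: (pselect (exists w, cyl_omega u w /\ cyl_omega v w)) => h; last first.
  left; apply/seteqP; split => // w [wu wv]; apply: h; by exists w.
right; case: (leqP (size u) (size v)) => uv.
  by exists v; apply/seteqP; split => [w []//|w wv]; split => //; exact: cyl_omega_sub h w wv.
exists u; apply/seteqP; split => [w []//|w wu]; split => //.
apply: (cyl_omega_sub (ltnW uv)) w wu.
by case: h => w [? ?]; exists w.
Qed.

Section omega_case.
Context (R : realType) (d : measure_display) (X : measurableType d) (A : finType).
Variable alpha : R.-pker X ~> pts_space A X.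
Hypothesis hN : forall x, alpha x [set None] = 0.
Variable a0 : A.

Definition wo := (nat -> A).
HB.instance Definition _ := Choice.copy wo (nat -> A).
HB.instance Definition _ := isPointed.Build wo (fun _ => a0).

Local Notation cx x := (cR alpha x).
Local Notation sx x := (sR alpha x).

Lemma hpo x : alpha x setT = 1.
Proof. exact: prob_kernel. Qed.

Lemma TS0o u x : TS alpha u x = 0.
Proof.
elim: u x => [|a u IH] x /=; first exact: hN.
rewrite (_ : TS alpha u = fun _ => 0); last by apply/funext => x'; rewrite IH.
by rewrite /Pa_integral integral0_eq // => -[[? ?]|].
Qed.

Lemma sx0 x u : sx x u = 0%R.
Proof. by rewrite /sR TS0o. Qed.

Definition Dw x := [set y : R | inC (cx x) (sx x) [::] y].
Definition phio x (y : R) : wo := fun n => nth a0 (pre (cx x) (sx x) y n.+1) n.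

Lemma nostop_o x y n : ~~ stopn (cx x) (sx x) y n.
Proof.
rewrite /stopn /inS sx0 addr0; apply/negP => /andP[/andP[h1 h2] _].
by have := le_lt_trans h1 h2; rewrite ltxx.
Qed.

Lemma phio_cyl x y u : Dw x y -> (cyl_omega u (phio x y) <-> inC (cx x) (sx x) u y).
Proof.
move=> Dy.
have ex : forall u, (sx x u + \sum_(a : A) cx x (rcons u a) = cx x u)%R.
  by move=> u'; apply: relR_eq; exact: hpo.
have sz := nostop_size (@cR_ge0 _ _ _ _ alpha x) (@sR_ge0 _ _ _ _ alpha x)
    (@relR _ _ _ _ alpha x) (ex [::]) ex Dy (nostop_o x y).
rewrite /cyl_omega /= /phio mkseq_pre //.
split; first by move=> h; apply/(inC_pre _ _ _ _ Dy).
by move=> h; apply/(inC_pre _ _ _ _ Dy).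
Qed.

Lemma Dw_cyl x u : Dw x `&` phio x @^-1` (cyl_omega u) = [set y | inC (cx x) (sx x) u y].
Proof.
apply/seteqP; split => y /=.
  by move=> [Dy h]; apply/(phio_cyl u Dy).
move=> h; have Dy : Dw x y by apply: inC_nil h.
by split => //; apply/(phio_cyl u Dy).
Qed.

Lemma leb_cyl x u : lebesgue_measure (Dw x `&` phio x @^-1` (cyl_omega u)) = TC alpha u x.
Proof. by rewrite Dw_cyl leb_inC // cRE. Qed.

Lemma sol_TC tr : trace_sol_omega alpha tr -> forall u x, tr x (cyl_omega u) = TC alpha u x.
Proof.
case=> _ _ h0 hS; elim=> [|a u IH] x; first by rewrite h0.
rewrite hS /=; congr (Pa_integral _ _ _ _); apply/funext => x'; exact: IH.
Qed.

Definition tr0 x (B : set (nat -> A)) := lebesgue_measure (Dw x `&` phio x @^-1` B).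

Lemma tr0_set0 x : tr0 x set0 = 0.
Proof. by rewrite /tr0 preimage_set0 setI0 measure0. Qed.

Lemma tr0_sol : trace_sol_omega alpha tr0.
Proof.
split.
- move=> s [->|[u ->]].
    rewrite (_ : (fun x => _) = fun _ => 0); first exact: measurable_cst.
    by apply/funext => x; rewrite tr0_set0.
  rewrite (_ : (fun x => _) = TC alpha u); first exact: TC_meas.
  by apply/funext => x; rewrite /tr0 leb_cyl.
- exact: tr0_set0.
- by move=> x; rewrite /tr0 leb_cyl.
- move=> x a u; rewrite /tr0 leb_cyl /=; congr (Pa_integral _ _ _ _).
  by apply/funext => x'; rewrite leb_cyl.
Qed.

Lemma cyl_nil : cyl_omega [::] = [set: nat -> A].
Proof. by apply/seteqP; split. Qed.

Lemma omega_main : trace_conclusion (@S_omega A) (trace_sol_omega alpha) true.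
Proof.
split.
- by exists tr0; exact: tr0_sol.
- move=> tr1 tr2 h1 h2 x s [->|[u ->]].
    by case: h1 => _ -> _ _; case: h2 => _ -> _ _.
  by rewrite (sol_TC h1) (sol_TC h2).
- move=> tr htr x.
  have mphi : forall s, (@S_omega A : set (set wo)) s -> measurable (Dw x `&` phio x @^-1` s).
    move=> s [->|[u ->]]; first by rewrite preimage_set0 setI0.
    by rewrite Dw_cyl; exact: meas_inC.
  have := @push_finish R _ (@S_omega A : set (set wo)) (Dw x) (meas_inC (cx x) (sx x) [::]) (phio x) mphi (tr x) true
    (fun _ => cyl_omega [::]).
  apply.
  + by left.
  + exact: setI_closed_omega.
  + by move=> n; right; exists [::].
  + by move=> n; rewrite (sol_TC htr) /= ltey.
  + by rewrite bigcup_const // cyl_nil.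
  + move=> s [->|[u ->]].
      by rewrite preimage_set0 setI0 measure0; case: htr => _ -> _ _.
    by rewrite leb_cyl (sol_TC htr).
  + by rewrite /= /Dw leb_inC // cR_nil.
Qed.

End omega_case.

Definition pw (A : finType) (w : inf_word A) (n : nat) : seq A :=
  match w with inl z => take n z | inr z => mkseq z n end.

Lemma cyl_infE (A : finType) (u : seq A) w : cyl_inf u w <-> pw w (size u) = u.
Proof. by case: w => z /=; rewrite ?prefixE //; split => [/eqP|->]. Qed.

Lemma pw_take (A : finType) (w : inf_word A) n m : (n <= m)%N -> take n (pw w m) = pw w n.
Proof. by case: w => z nm /=; [rewrite -take_min (minn_idPl nm)|rewrite take_mkseq]. Qed.

Lemma cyl_inf_sub (A : finType) (u v : seq A) : (size u <= size v)%N ->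
  (exists w, cyl_inf u w /\ cyl_inf v w) -> cyl_inf v `<=` cyl_inf u.
Proof.
move=> uv [w [/cyl_infE wu /cyl_infE wv]] w' /cyl_infE wv'; apply/cyl_infE.
by rewrite -(pw_take _ uv) wv' -wv pw_take.
Qed.

Lemma setI1_any (T : Type) (p : T) (B : set T) : [set p] `&` B = set0 \/ [set p] `&` B = [set p].
Proof.
case: (pselect (B p)) => h; [right|left]; apply/seteqP; split => y /=.
- by case.
- by move=> ->; split.
- by case=> -> /h.
- by [].
Qed.

Lemma setI_closed_inf (A : finType) : setI_closed (@S_inf A).
Proof.
move=> B C [->|[[u ->]|[u ->]]]; first by rewrite set0I; left.
- move=> _; case: (setI1_any (inl u) C) => ->; [by left|by right; left; exists u].
- move=> [->|[[v ->]|[v ->]]]; first by rewrite setI0; left.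
  + rewrite setIC; case: (setI1_any (inl v) (cyl_inf u)) => ->; [by left|by right; left; exists v].
  + case: (pselect (exists w, cyl_inf u w /\ cyl_inf v w)) => h; last first.
      left; apply/seteqP; split => // w [wu wv]; apply: h; by exists w.
    right; right; case: (leqP (size u) (size v)) => uv.
      by exists v; apply/seteqP; split => [w []//|w wv]; split => //; exact: cyl_inf_sub h w wv.
    exists u; apply/seteqP; split => [w []//|w wu]; split => //.
    apply: (cyl_inf_sub (ltnW uv)) w wu.
    by case: h => w [? ?]; exists w.
Qed.

Lemma meas_inS (R : realType) (A : finType) (c s : seq A -> R) u :
  measurable [set y : R | inS c s u y].
Proof.
have -> : [set y : R | inS c s u y] = [set` (`[L c s u, L c s u + s u[)%R].
  by apply/seteqP; split => y /=; rewrite in_itv.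
exact: measurable_itv.
Qed.

Lemma leb_inS (R : realType) (A : finType) (c s : seq A -> R) u : (0 <= s u)%R ->
  lebesgue_measure [set y : R | inS c s u y] = (s u)%:E.
Proof. by move=> s0; rewrite /inS leb_itv. Qed.

Section inf_case.
Context (R : realType) (d : measure_display) (X : measurableType d) (A : finType).
Variable alpha : R.-pker X ~> pts_space A X.

Definition wi := inf_word A.
HB.instance Definition _ := Choice.copy wi (inf_word A).
HB.instance Definition _ := isPointed.Build wi (inl [::]).

Local Notation cx x := (cR alpha x).
Local Notation sx x := (sR alpha x).

Lemma hpi x : alpha x setT = 1.
Proof. exact: prob_kernel. Qed.

Lemma exi x u : (sx x u + \sum_(a : A) cx x (rcons u a) = cx x u)%R.
Proof. by apply: relR_eq; exact: hpi. Qed.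

Lemma stopfunPx x y u : inC (cx x) (sx x) [::] y ->
  (stopfun (cx x) (sx x) y = Some u <-> inS (cx x) (sx x) u y).
Proof. by move=> Dy; apply: stopfunP. Qed.

Lemma inC_prex x y u : inC (cx x) (sx x) [::] y ->
  (inC (cx x) (sx x) u y <-> pre (cx x) (sx x) y (size u) = u).
Proof. by move=> Dy; apply: inC_pre. Qed.

Lemma inS_stopx x y u : inC (cx x) (sx x) [::] y -> inS (cx x) (sx x) u y ->
  stopn (cx x) (sx x) y (size u) /\ pre (cx x) (sx x) y (size u) = u.
Proof. by move=> Dy; apply: inS_stop. Qed.

Lemma inS_inCx x y u : inS (cx x) (sx x) u y -> inC (cx x) (sx x) u y.
Proof. by apply: inS_inC. Qed.

Lemma inC_takex x y u k : inC (cx x) (sx x) u y -> inC (cx x) (sx x) (take k u) y.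
Proof. by apply: inC_take. Qed.

Lemma inC_nilx x y u : inC (cx x) (sx x) u y -> inC (cx x) (sx x) [::] y.
Proof. by apply: inC_nil. Qed.

Lemma stop_nextx x y n : stopn (cx x) (sx x) y n -> wnext (cx x) (sx x) y (pre (cx x) (sx x) y n) = None.
Proof. by apply: stop_next. Qed.

Definition Dwi x := [set y : R | inC (cx x) (sx x) [::] y].

Definition phii x (y : R) : wi :=
  match stopfun (cx x) (sx x) y with
  | Some u => inl u
  | None => match pre (cx x) (sx x) y 1 with
            | a :: _ => inr (fun n => nth a (pre (cx x) (sx x) y n.+1) n)
            | [::] => inl [::]
            end
  end.

Lemma nostop_i x y : Dwi x y -> stopfun (cx x) (sx x) y = None ->
  forall n, size (pre (cx x) (sx x) y n) = n.
Proof.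
move=> Dy hN.
have ns : forall n, ~~ stopn (cx x) (sx x) y n.
  move=> n; apply/negP => /andP[h _].
  by have := (stopfunPx _ Dy).2 h; rewrite hN.
exact: (nostop_size (@cR_ge0 _ _ _ _ alpha x) (@sR_ge0 _ _ _ _ alpha x)
    (@relR _ _ _ _ alpha x) (exi x [::]) (exi x) Dy ns).
Qed.

Lemma phii_none x y : Dwi x y -> stopfun (cx x) (sx x) y = None ->
  exists a, phii x y = inr (fun n => nth a (pre (cx x) (sx x) y n.+1) n).
Proof.
move=> Dy hN; have sz := nostop_i Dy hN.
rewrite /phii hN; have := sz 1%N.
by case: (pre (cx x) (sx x) y 1) => [//|a r] _; exists a.
Qed.

Lemma phii_inl x y u : Dwi x y -> (phii x y = inl u <-> inS (cx x) (sx x) u y).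
Proof.
move=> Dy; split.
  case E: (stopfun (cx x) (sx x) y) => [v|].
    by rewrite /phii E => -[<-]; apply/(stopfunPx _ Dy).
  by have [a ->] := phii_none Dy E.
by move=> h; rewrite /phii ((stopfunPx u Dy).2 h).
Qed.

Lemma phii_cyl x y u : Dwi x y -> (cyl_inf u (phii x y) <-> inC (cx x) (sx x) u y).
Proof.
move=> Dy.
case E: (stopfun (cx x) (sx x) y) => [v|].
  have hv : inS (cx x) (sx x) v y by apply/(stopfunPx _ Dy).
  have [st pv] := inS_stopx Dy hv.
  rewrite /phii E /= prefixE; split.
    by move/eqP => <-; apply: inC_takex; exact: inS_inCx.
  move=> /(inC_prex _ Dy) pu.
  case: (leqP (size u) (size v)) => uv.
    by rewrite -pv -(@pre_take _ _ (cx x) (sx x) y _ _ uv) pu.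
  have := pre_const (stop_nextx st) (ltnW uv); rewrite pu pv => e.
  by rewrite -e ltnn in uv.
have [a ->] := phii_none Dy E.
rewrite /= mkseq_pre; last exact: nostop_i.
by split => [h|h]; apply/(inC_prex _ Dy).
Qed.

Lemma Dwi_cyl x u : Dwi x `&` phii x @^-1` (cyl_inf u) = [set y | inC (cx x) (sx x) u y].
Proof.
apply/seteqP; split => y /=.
  by move=> [Dy h]; apply/(phii_cyl u Dy).
move=> h; have Dy : Dwi x y by apply: inC_nilx h.
by split => //; apply/(phii_cyl u Dy).
Qed.

Lemma Dwi_one x u : Dwi x `&` phii x @^-1` [set inl u] = [set y | inS (cx x) (sx x) u y].
Proof.
apply/seteqP; split => y /=.
  by move=> [Dy h]; apply/(phii_inl u Dy).
move=> h; have Dy : Dwi x y by apply: inC_nilx (inS_inCx h).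
by split => //; apply/(phii_inl u Dy).
Qed.

Lemma lebi_cyl x u : lebesgue_measure (Dwi x `&` phii x @^-1` (cyl_inf u)) = TC alpha u x.
Proof. by rewrite Dwi_cyl leb_inC // cRE. Qed.

Lemma lebi_one x u : lebesgue_measure (Dwi x `&` phii x @^-1` [set inl u]) = TS alpha u x.
Proof. by rewrite Dwi_one leb_inS // sRE. Qed.

Lemma soli_TC tr : trace_sol_inf alpha tr -> forall u x, tr x (cyl_inf u) = TC alpha u x.
Proof.
case=> _ _ _ h0 hS; elim=> [|a u IH] x; first by rewrite h0.
rewrite hS /=; congr (Pa_integral _ _ _ _); apply/funext => x'; exact: IH.
Qed.

Lemma soli_TS tr : trace_sol_inf alpha tr -> forall u x, tr x [set inl u] = TS alpha u x.
Proof.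
case=> _ _ [h0 hS] _ _; elim=> [|a u IH] x; first by rewrite h0.
rewrite hS /=; congr (Pa_integral _ _ _ _); apply/funext => x'; exact: IH.
Qed.

Definition tri x (B : set (inf_word A)) := lebesgue_measure (Dwi x `&` phii x @^-1` B).

Lemma tri_set0 x : tri x set0 = 0.
Proof. by rewrite /tri preimage_set0 setI0 measure0. Qed.

Lemma tri_sol : trace_sol_inf alpha tri.
Proof.
split.
- move=> s [->|[[u ->]|[u ->]]].
  + rewrite (_ : (fun x => _) = fun _ => 0); first exact: measurable_cst.
    by apply/funext => x; rewrite tri_set0.
  + rewrite (_ : (fun x => _) = TS alpha u); first exact: TS_meas.
    by apply/funext => x; rewrite /tri lebi_one.
  + rewrite (_ : (fun x => _) = TC alpha u); first exact: TC_meas.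
    by apply/funext => x; rewrite /tri lebi_cyl.
- exact: tri_set0.
- split; first by move=> x; rewrite /tri lebi_one.
  move=> x a u; rewrite /tri lebi_one /=; congr (Pa_integral _ _ _ _).
  by apply/funext => x'; rewrite lebi_one.
- by move=> x; rewrite /tri lebi_cyl.
- move=> x a u; rewrite /tri lebi_cyl /=; congr (Pa_integral _ _ _ _).
  by apply/funext => x'; rewrite lebi_cyl.
Qed.

Lemma cyl_inf_nil : cyl_inf [::] = [set: inf_word A].
Proof. by apply/seteqP; split => [w _ //|[z|z] _]; rewrite /cyl_inf /= ?prefixE ?take0. Qed.

Lemma inf_main : trace_conclusion (@S_inf A) (trace_sol_inf alpha) true.
Proof.
split.
- by exists tri; exact: tri_sol.
- move=> tr1 tr2 h1 h2 x s [->|[[u ->]|[u ->]]].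
  + by case: h1 => _ -> _ _ _; case: h2 => _ -> _ _ _.
  + by rewrite (soli_TS h1) (soli_TS h2).
  + by rewrite (soli_TC h1) (soli_TC h2).
- move=> tr htr x.
  have mphi : forall s, (@S_inf A : set (set wi)) s -> measurable (Dwi x `&` phii x @^-1` s).
    move=> s [->|[[u ->]|[u ->]]]; first by rewrite preimage_set0 setI0.
    + by rewrite Dwi_one; exact: meas_inS.
    + by rewrite Dwi_cyl; exact: meas_inC.
  have := @push_finish R _ (@S_inf A : set (set wi)) (Dwi x) (meas_inC (cx x) (sx x) [::]) (phii x) mphi (tr x) true
    (fun _ => cyl_inf [::]).
  apply.
  + by left.
  + exact: setI_closed_inf.
  + by move=> n; right; right; exists [::].
  + by move=> n; rewrite (soli_TC htr) /= ltey.
  + by rewrite bigcup_const // cyl_inf_nil.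
  + move=> s [->|[[u ->]|[u ->]]].
    * by rewrite preimage_set0 setI0 measure0; case: htr => _ -> _ _ _.
    * by rewrite lebi_one (soli_TS htr).
    * by rewrite lebi_cyl (soli_TC htr).
  + by rewrite /= /Dwi leb_inC // cR_nil.
Qed.

End inf_case.

Lemma setI_closed_star (A : finType) : setI_closed (@S_star A).
Proof.
move=> B C [->|[u ->]]; first by rewrite set0I; left.
by move=> _; case: (setI1_any u C) => ->; [left|right; exists u].
Qed.

Section star_case.
Context (R : realType) (d : measure_display) (X : measurableType d) (A : finType).
Variable alpha : R.-spker X ~> pts_space A X.

Definition ws := seq A.
HB.instance Definition _ := Choice.copy ws (seq A).
HB.instance Definition _ := isPointed.Build ws [::].

Local Notation cx x := (cR alpha x).
Local Notation sx x := (sR alpha x).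

Lemma stopfunPs x y u : inC (cx x) (sx x) [::] y ->
  (stopfun (cx x) (sx x) y = Some u <-> inS (cx x) (sx x) u y).
Proof. by move=> Dy; apply: stopfunP. Qed.

Lemma inS_inCs x y u : inS (cx x) (sx x) u y -> inC (cx x) (sx x) [::] y.
Proof.
move=> h; have hC : inC (cx x) (sx x) u y by apply: inS_inC.
by apply: inC_nil => //; exact: hC.
Qed.

Definition Ds x : set R := \bigcup_n [set y | if unpickle n is Some u then inS (cx x) (sx x) u y else False].

Lemma DsP x y : Ds x y <-> exists u, inS (cx x) (sx x) u y.
Proof.
split.
  move=> [n _]; case E: (unpickle n) => [u|] h //; by exists u.
by move=> [u h]; exists (pickle u) => //; rewrite pickleK.
Qed.

Lemma Ds_meas x : measurable (Ds x).
Proof.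
apply: bigcupT_measurable => n; case: (unpickle n) => [u|]; first exact: meas_inS.
by rewrite [X in measurable X](_ : _ = set0) //; apply/seteqP; split.
Qed.

Definition phis x (y : R) : ws := if stopfun (cx x) (sx x) y is Some u then u else [::].

Lemma Ds_one x u : Ds x `&` phis x @^-1` [set u] = [set y | inS (cx x) (sx x) u y].
Proof.
apply/seteqP; split => y /=.
  move=> [/DsP [v hv]]; have Dy := inS_inCs hv.
  by rewrite /phis ((stopfunPs v Dy).2 hv) /= => <-.
move=> h; have Dy := inS_inCs h; split; first by apply/DsP; exists u.
by rewrite /phis ((stopfunPs u Dy).2 h).
Qed.

Lemma lebs_one x u : lebesgue_measure (Ds x `&` phis x @^-1` [set u]) = TS alpha u x.
Proof. by rewrite Ds_one leb_inS // sRE. Qed.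

Lemma lebs_le1 x : lebesgue_measure (Ds x) <= 1.
Proof.
have <- : lebesgue_measure [set y : R | inC (cx x) (sx x) [::] y] = 1.
  by rewrite leb_inC // cR_nil.
apply: le_measure; rewrite ?inE; [exact: Ds_meas|exact: meas_inC|].
by move=> y /DsP [u h]; exact: inS_inCs h.
Qed.

Lemma sols_TS tr : trace_sol_star alpha tr -> forall u x, tr x [set u] = TS alpha u x.
Proof.
case=> _ _ h0 hS; elim=> [|a u IH] x; first by rewrite h0.
rewrite hS /=; congr (Pa_integral _ _ _ _); apply/funext => x'; exact: IH.
Qed.

Definition trs x (B : set (seq A)) := lebesgue_measure (Ds x `&` phis x @^-1` B).

Lemma trs_set0 x : trs x set0 = 0.
Proof. by rewrite /trs preimage_set0 setI0 measure0. Qed.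

Lemma trs_sol : trace_sol_star alpha trs.
Proof.
split.
- move=> s [->|[u ->]].
    rewrite (_ : (fun x => _) = fun _ => 0); first exact: measurable_cst.
    by apply/funext => x; rewrite trs_set0.
  rewrite (_ : (fun x => _) = TS alpha u); first exact: TS_meas.
  by apply/funext => x; rewrite /trs lebs_one.
- exact: trs_set0.
- by move=> x; rewrite /trs lebs_one.
- move=> x a u; rewrite /trs lebs_one /=; congr (Pa_integral _ _ _ _).
  by apply/funext => x'; rewrite lebs_one.
Qed.

Definition gs (n : nat) : set ws := if unpickle n is Some u then [set u] else set0.

Lemma star_main : trace_conclusion (@S_star A) (trace_sol_star alpha) false.
Proof.
split.
- by exists trs; exact: trs_sol.
- move=> tr1 tr2 h1 h2 x s [->|[u ->]].
    by case: h1 => _ -> _ _; case: h2 => _ -> _ _.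
  by rewrite (sols_TS h1) (sols_TS h2).
- move=> tr htr x.
  have mphi : forall s, (@S_star A : set (set ws)) s -> measurable (Ds x `&` phis x @^-1` s).
    move=> s [->|[u ->]]; first by rewrite preimage_set0 setI0.
    by rewrite Ds_one; exact: meas_inS.
  have := @push_finish R _ (@S_star A : set (set ws)) (Ds x) (Ds_meas x) (phis x) mphi (tr x) false gs.
  apply.
  + by left.
  + exact: setI_closed_star.
  + by move=> n; rewrite /gs; case: (unpickle n) => [u|]; [right; exists u|left].
  + move=> n; rewrite /gs; case: (unpickle n) => [u|].
      by rewrite (sols_TS htr) ltey_eq TS_fin.
    by case: htr => _ -> _ _; rewrite ltey.
  + apply/seteqP; split => // u _; exists (pickle u) => //.
    by rewrite /gs pickleK.
  + move=> s [->|[u ->]].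
      by rewrite preimage_set0 setI0 measure0; case: htr => _ -> _ _.
    by rewrite lebs_one (sols_TS htr).
  + exact: lebs_le1.
Qed.

End star_case.

Lemma zero_main (R : realType) (d : measure_display) (X : measurableType d) :
  trace_conclusion (@S_zero) (trace_sol_zero (R:=R) (X:=X)) false.
Proof.
have Bset0 : forall B : set void, B = set0.
  by move=> B; apply/seteqP; split => -[].
split.
- exists (fun _ _ => 0); split => // s _; exact: measurable_cst.
- move=> tr1 tr2 h1 h2 x s ->.
  by case: h1 => _ ->; case: h2 => _ ->.
- move=> tr [_ h0] x.
  have hF : forall F : nat -> set void,
      (fun n => \sum_(0 <= k < n) tr x (F k)) @ \oo --> tr x (\bigcup_n F n).
    move=> F; rewrite (Bset0 (\bigcup_n F n)) h0.
    have -> : (fun n => \sum_(0 <= k < n) tr x (F k)) = fun _ => 0.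
      by apply/funext => n; rewrite big1 // => k _; rewrite (Bset0 (F k)) h0.
    exact: cvg_cst.
  split.
  + by move=> s ->; rewrite h0 lexx lee01.
  + split; [by rewrite h0|by move=> s ->; rewrite h0|by move=> F _ _ _; exact: hF].
  + exists (fun _ => set0); split => //; first by move=> n; rewrite h0 ltry.
    by rewrite (Bset0 setT) (Bset0 (\bigcup_n set0)).
  + exists (fun _ => 0); split.
    * split; [by []|by []|move=> F _ _].
      have -> : (fun n => \sum_(0 <= k < n) (fun _ : set void => (0 : \bar R)) (F k)) = fun _ => 0.
        by apply/funext => n; rewrite big1.
      exact: cvg_cst.
    * by move=> s ->; rewrite h0.
    * move=> nu [nu0 _ _] _ B _; by rewrite (Bset0 B).
    * exact: lee01.
Qed.

Lemma omega_noA (R : realType) (d : measure_display) (X : measurableType d) (A : finType)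
    (alpha : R.-pker X ~> pts_space A X) :
  (forall x, alpha x [set None] = 0) -> (forall a : A, False) ->
  trace_conclusion (@S_omega A) (trace_sol_omega alpha) true.
Proof.
move=> hN noA.
have noX : X -> False.
  move=> x; have : alpha x setT = 1 by exact: prob_kernel.
  have -> : [set: pts_space A X] = [set None].
    by apply/seteqP; split => // -[[a ?]|] _ //; case: (noA a).
  move=> h; have : (1 : \bar R) = 0 by rewrite -h; exact: hN.
  by move/eqP; rewrite onee_eq0.
split.
- exists (fun _ _ => 0); split; first (by move=> s _; exact: measurable_cst);
    by move=> x; case: (noX x).
- by move=> tr1 tr2 _ _ x; case: (noX x).
- by move=> tr _ x; case: (noX x).
Qed.

Unset Implicit Arguments.
Set Strict Implicit.

Theorem mainTheorem6 (R : realType) (d : measure_display)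
    (X : measurableType d) (A : finType) :
  [/\ (* type 0 *)
      (forall alpha : R.-spker X ~> pts_space A X,
         (forall x, alpha x [set None] = 0) ->
         trace_conclusion (@S_zero) (trace_sol_zero (R:=R) (X:=X)) false),
      (* type * *)
      (forall alpha : R.-spker X ~> pts_space A X,
         trace_conclusion (@S_star A) (trace_sol_star alpha) false),
      (* type omega *)
      (forall alpha : R.-pker X ~> pts_space A X,
         (forall x, alpha x [set None] = 0) ->
         trace_conclusion (@S_omega A) (trace_sol_omega alpha) true) &
      (* type infty *)
      (forall alpha : R.-pker X ~> pts_space A X,
         trace_conclusion (@S_inf A) (trace_sol_inf alpha) true)].
Proof.
split.
- by move=> alpha _; exact: zero_main.
- by move=> alpha; exact: star_main.
- move=> alpha hN; case: (pickP (fun _ : A => true)) => [a0 _|noA].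
    exact: (omega_main hN a0).
  by apply: omega_noA => // a; have := noA a.
- by move=> alpha; exact: inf_main.
Qed.
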